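(* Let $(A,\star,\mathcal{B}_A)$ be a quadratic permutative algebra and $(B,\bullet,\{\cdot,\cdot\},\mathcal{B}_B)$ a quadratic Poisson algebra. On $A\otimes B$ define $(x\otimes a)\circ(y\otimes b)=(x\star y)\otimes(a\bullet b)$, $[x\otimes a,y\otimes b]=(x\star y)\otimes\{a,b\}$ and $\mathcal{B}_{A\otimes B}(x\otimes a,y\otimes b)=\mathcal{B}_A(x,y)\mathcal{B}_B(a,b)$. Then $(A\otimes B,\circ,[\cdot,\cdot],\mathcal{B}_{A\otimes B})$ is a quadratic dual pre-Poisson algebra.
   Context: Field $\mathbb{F}$ of characteristic $0$. A quadratic permutative algebra $(A,\star,\mathcal{B}_A)$: $x\star(y\star z)=(x\star y)\star z=(y\star x)\star z$, with $\mathcal{B}_A$ a nondegenerate skew-symmetric bilinear form satisfying $\mathcal{B}_A(x\star y,z)=\mathcal{B}_A(x,y\star z-z\star y)$. A quadratic Poisson algebra $(B,\bullet,\{\cdot,\cdot\},\mathcal{B}_B)$: a Poisson algebra ($(B,\bullet)$ commutative associative, $(B,\{\cdot,\cdot\})$ Lie, $\{x,y\bullet z\}=\{x,y\}\bullet z+y\bullet\{x,z\}$) with a nondegenerate symmetric bilinear form satisfying $\mathcal{B}_B(x\bullet y,z)=\mathcal{B}_B(x,y\bullet z)$ and $\mathcal{B}_B(\{x,y\},z)=\mathcal{B}_B(x,\{y,z\})$. A quadratic dual pre-Poisson algebra is a dual pre-Poisson algebra ($x\circ(y\circ z)=(x\circ y)\circ z=(y\circ x)\circ z$; $[x,[y,z]]=[[x,y],z]+[y,[x,z]]$;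 $[x,y\circ z]=[x,y]\circ z+y\circ[x,z]$; $[x\circ y,z]=x\circ[y,z]+y\circ[x,z]$; $[x,y]\circ z=-[y,x]\circ z$) with a nondegenerate skew-symmetric bilinear form $\mathcal{B}$ satisfying $\mathcal{B}(x\circ y,z)=\mathcal{B}(x,y\circ z-z\circ y)$ and $\mathcal{B}([x,y],z)=\mathcal{B}(x,[y,z]+[z,y])$. *)

(* Defs.v *)
From HB Require Import structures.
From mathcomp Require Import all_boot all_order all_algebra.
Set Implicit Arguments. Unset Strict Implicit. Unset Printing Implicit Defensive.
Import GRing.Theory.
Local Open Scope ring_scope.

Definition bilinear_map (F : fieldType) (V W : lmodType F) (f : V -> V -> W) :=
  (forall (c : F) x y z, f (c *: x + y) z = c *: f x z + f y z) /\
  (forall (c : F) x y z, f x (c *: y + z) = c *: f x y + f x z).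

Definition bilinear_form (F : fieldType) (V : lmodType F) (f : V -> V -> F) :=
  (forall (c : F) x y z, f (c *: x + y) z = c * f x z + f y z) /\
  (forall (c : F) x y z, f x (c *: y + z) = c * f x y + f x z).

Definition nondegenerate (F : fieldType) (V : lmodType F) (f : V -> V -> F) :=
  forall x, (forall y, f x y = 0) -> x = 0.

Definition skew_symmetric (F : fieldType) (V : lmodType F) (f : V -> V -> F) :=
  forall x y, f x y = - f y x.

Definition symmetric_form (F : fieldType) (V : lmodType F) (f : V -> V -> F) :=
  forall x y, f x y = f y x.

Definition quadratic_permutative (F : fieldType) (V : lmodType F)
    (star : V -> V -> V) (B : V -> V -> F) :=
  [/\ bilinear_map star,
      (forall x y z, star x (star y z) = star (star x y) z),
      (forall x y z, star (star x y) z = star (star y x) z),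
      bilinear_form B &
   [/\ skew_symmetric B, nondegenerate B &
      (forall x y z, B (star x y) z = B x (star y z - star z y))]].

Definition quadratic_poisson (F : fieldType) (V : lmodType F)
    (dot br : V -> V -> V) (B : V -> V -> F) :=
  [/\ bilinear_map dot, bilinear_map br,
      (forall x y, dot x y = dot y x),
      (forall x y z, dot x (dot y z) = dot (dot x y) z) &
   [/\ (forall x y, br x y = - br y x),
       (forall x y z, br x (br y z) + br y (br z x) + br z (br x y) = 0),
       (forall x y z, br x (dot y z) = dot (br x y) z + dot y (br x z)),
       bilinear_form B &
    [/\ symmetric_form B, nondegenerate B,
        (forall x y z, B (dot x y) z = B x (dot y z)) &
        (forall x y z, B (br x y) z = B x (br y z))]]].

Definition quadratic_dual_pre_poisson (F : fieldType) (V : lmodType F)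
    (circ br : V -> V -> V) (B : V -> V -> F) :=
  [/\ bilinear_map circ, bilinear_map br,
      (forall x y z, circ x (circ y z) = circ (circ x y) z),
      (forall x y z, circ (circ x y) z = circ (circ y x) z) &
   [/\ (forall x y z, br x (br y z) = br (br x y) z + br y (br x z)),
       (forall x y z, br x (circ y z) = circ (br x y) z + circ y (br x z)),
       (forall x y z, br (circ x y) z = circ x (br y z) + circ y (br x z)),
       (forall x y z, circ (br x y) z = - circ (br y x) z) &
    [/\ bilinear_form B, skew_symmetric B, nondegenerate B,
        (forall x y z, B (circ x y) z = B x (circ y z - circ z y)) &
        (forall x y z, B (br x y) z = B x (br y z + br z y))]]].

(* Finite-dimensional model: A = F^n, B = F^m (row vectors), and
   A (x) B = 'M_(n,m), with the pure tensor x (x) a := x^T *m a. *)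
Definition tens (F : fieldType) (n m : nat) (x : 'rV[F]_n) (a : 'rV[F]_m)
  : 'M[F]_(n, m) := x^T *m a.

Definition basis_vec {F : fieldType} {n : nat} (i : 'I_n) : 'rV[F]_n :=
  delta_mx 0 i.

(* Bilinear extension of (x (x) a, y (x) b) |-> mu x y (x) nu a b. *)
Definition tensor_op (F : fieldType) (n m : nat)
    (mu : 'rV[F]_n -> 'rV[F]_n -> 'rV[F]_n)
    (nu : 'rV[F]_m -> 'rV[F]_m -> 'rV[F]_m)
    (X Y : 'M[F]_(n, m)) : 'M[F]_(n, m) :=
  \sum_(i < n) \sum_(j < n) \sum_(k < m) \sum_(l < m)
     (X i k * Y j l) *: tens (mu (basis_vec (F:=F) i) (basis_vec (F:=F) j))
                             (nu (basis_vec (F:=F) k) (basis_vec (F:=F) l)).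

(* Bilinear extension of (x (x) a, y (x) b) |-> BA x y * BB a b. *)
Definition tensor_form (F : fieldType) (n m : nat)
    (BA : 'rV[F]_n -> 'rV[F]_n -> F) (BB : 'rV[F]_m -> 'rV[F]_m -> F)
    (X Y : 'M[F]_(n, m)) : F :=
  \sum_(i < n) \sum_(j < n) \sum_(k < m) \sum_(l < m)
     X i k * Y j l * (BA (basis_vec (F:=F) i) (basis_vec (F:=F) j) * BB (basis_vec (F:=F) k) (basis_vec (F:=F) l)).

(* Main.v *)
Require Import Defs.
From HB Require Import structures.
From mathcomp Require Import all_boot all_order all_algebra.
From mathcomp Require Import ring.
Import GRing.Theory.
Local Open Scope ring_scope.

Section BM.
Context {F : fieldType} {V W : lmodType F} {f : V -> V -> W}.
Hypothesis hf : bilinear_map f.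

Lemma bm0l y : f 0 y = 0.
Proof.
have h := hf.1 1 0 0 y; rewrite !scale1r addr0 in h.
by apply: (addrI (f 0 y)); rewrite addr0 -h.
Qed.
Lemma bm0r y : f y 0 = 0.
Proof.
have h := hf.2 1 y 0 0; rewrite !scale1r addr0 in h.
by apply: (addrI (f y 0)); rewrite addr0 -h.
Qed.
Lemma bmDl x x' y : f (x + x') y = f x y + f x' y.
Proof. by have := hf.1 1 x x' y; rewrite !scale1r. Qed.
Lemma bmDr x y y' : f x (y + y') = f x y + f x y'.
Proof. by have := hf.2 1 x y y'; rewrite !scale1r. Qed.
Lemma bmZl c x y : f (c *: x) y = c *: f x y.
Proof. by have := hf.1 c x 0 y; rewrite !addr0 bm0l addr0. Qed.
Lemma bmZr c x y : f x (c *: y) = c *: f x y.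
Proof. by have := hf.2 c x y 0; rewrite !addr0 bm0r addr0. Qed.
Lemma bmNl x y : f (- x) y = - f x y.
Proof. by rewrite -scaleN1r bmZl scaleN1r. Qed.
Lemma bmNr x y : f x (- y) = - f x y.
Proof. by rewrite -scaleN1r bmZr scaleN1r. Qed.
Lemma bmBl x x' y : f (x - x') y = f x y - f x' y.
Proof. by rewrite bmDl bmNl. Qed.
Lemma bmBr x y y' : f x (y - y') = f x y - f x y'.
Proof. by rewrite bmDr bmNr. Qed.
Lemma bm_suml I r (P : pred I) (g : I -> V) y :
  f (\sum_(i <- r | P i) g i) y = \sum_(i <- r | P i) f (g i) y.
Proof. by rewrite (big_morph (fun x => f x y) (fun x x' => bmDl x x' y) (bm0l y)). Qed.
Lemma bm_sumr I r (P : pred I) (g : I -> V) y :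
  f y (\sum_(i <- r | P i) g i) = \sum_(i <- r | P i) f y (g i).
Proof. by rewrite (big_morph (fun x => f y x) (fun x x' => bmDr y x x') (bm0r y)). Qed.
End BM.

Lemma bm_expand (F : fieldType) k (W : lmodType F) (f : 'rV[F]_k -> 'rV[F]_k -> W)
  (hf : bilinear_map f) x y :
  f x y = \sum_(i < k) \sum_(j < k) (x 0 i * y 0 j) *: f (basis_vec i) (basis_vec j).
Proof.
rewrite {1}(row_sum_delta x) {1}(row_sum_delta y) (bm_suml hf).
apply: eq_bigr => i _; rewrite (bmZl hf) (bm_sumr hf) scaler_sumr.
by apply: eq_bigr => j _; rewrite (bmZr hf) scalerA.
Qed.

Arguments bm_expand {F k W f} hf x y.

Lemma coef_basis (F : fieldType) p (c : 'I_p -> F) j :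
  (\sum_(k < p) c k *: basis_vec k) 0 j = c j.
Proof.
have -> : \sum_(k < p) c k *: basis_vec k = \row_k c k.
  by rewrite [RHS]row_sum_delta; apply: eq_bigr => k _; rewrite mxE.
by rewrite mxE.
Qed.

Section Tens.
Variables (F : fieldType) (n m : nat).
Local Notation T := 'M[F]_(n, m).

Lemma tens_entry (x : 'rV[F]_n) (a : 'rV[F]_m) i k : tens x a i k = x 0 i * a 0 k.
Proof. by rewrite /tens mxE big_ord1 !mxE. Qed.
Lemma tens0l (a : 'rV[F]_m) : tens (0 : 'rV[F]_n) a = 0.
Proof. by rewrite /tens trmx0 mul0mx. Qed.
Lemma tens0r (x : 'rV[F]_n) : tens x (0 : 'rV[F]_m) = 0.
Proof. by rewrite /tens mulmx0. Qed.
Lemma tensDl x x' (a : 'rV[F]_m) : tens (x + x' : 'rV[F]_n) a = tens x a + tens x' a.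
Proof. by rewrite /tens linearD mulmxDl. Qed.
Lemma tensDr (x : 'rV[F]_n) (a a' : 'rV[F]_m) : tens x (a + a') = tens x a + tens x a'.
Proof. by rewrite /tens mulmxDr. Qed.
Lemma tensZl c x (a : 'rV[F]_m) : tens (c *: x : 'rV[F]_n) a = c *: tens x a.
Proof. by rewrite /tens linearZ /= scalemxAl. Qed.
Lemma tensZr c (x : 'rV[F]_n) (a : 'rV[F]_m) : tens x (c *: a) = c *: tens x a.
Proof. by rewrite /tens scalemxAr. Qed.
Lemma tens_suml I r (P : pred I) (g : I -> 'rV[F]_n) (a : 'rV[F]_m) :
  tens (\sum_(i <- r | P i) g i) a = \sum_(i <- r | P i) tens (g i) a.
Proof. by rewrite (big_morph (fun x => tens x a) (fun x x' => tensDl x x' a) (tens0l a)). Qed.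
Lemma tens_sumr I r (P : pred I) (g : I -> 'rV[F]_m) (x : 'rV[F]_n) :
  tens x (\sum_(i <- r | P i) g i) = \sum_(i <- r | P i) tens x (g i).
Proof. by rewrite (big_morph (fun a => tens x a) (fun a a' => tensDr x a a') (tens0r x)). Qed.
Lemma tens_basis i k : tens (basis_vec i) (basis_vec k) = delta_mx i k :> T.
Proof. by rewrite /tens /basis_vec trmx_delta mul_delta_mx. Qed.

Lemma top_bil (mu : 'rV[F]_n -> 'rV[F]_n -> 'rV[F]_n) (nu : 'rV[F]_m -> 'rV[F]_m -> 'rV[F]_m) : bilinear_map (tensor_op (n:=n) (m:=m) mu nu).
Proof.
split=> c X Y Z; rewrite /tensor_op scaler_sumr -big_split; apply: eq_bigr => i _;
rewrite scaler_sumr -big_split; apply: eq_bigr => j _;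
rewrite scaler_sumr -big_split; apply: eq_bigr => k _;
rewrite scaler_sumr -big_split; apply: eq_bigr => l _;
by rewrite !mxE !scalerA /= -scalerDl; congr (_ *: _); ring.
Qed.

Lemma tform_bil (BA : 'rV[F]_n -> 'rV[F]_n -> F) (BB : 'rV[F]_m -> 'rV[F]_m -> F) : bilinear_form (tensor_form (n:=n) (m:=m) BA BB).
Proof.
split=> c X Y Z; rewrite /tensor_form mulr_sumr -big_split; apply: eq_bigr => i _;
rewrite mulr_sumr -big_split; apply: eq_bigr => j _;
rewrite mulr_sumr -big_split; apply: eq_bigr => k _;
rewrite mulr_sumr -big_split; apply: eq_bigr => l _;
by rewrite !mxE; rewrite /=; ring.
Qed.

Lemma top_pure (mu : 'rV[F]_n -> 'rV[F]_n -> 'rV[F]_n) (nu : 'rV[F]_m -> 'rV[F]_m -> 'rV[F]_m) (hmu : bilinear_map mu) (hnu : bilinear_map nu) x a y b :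
  tensor_op (n:=n) (m:=m) mu nu (tens x a) (tens y b) = tens (mu x y) (nu a b).
Proof.
rewrite (bm_expand hmu x y) (bm_expand hnu a b) /tensor_op tens_suml.
apply: eq_bigr => i _; rewrite tens_suml; apply: eq_bigr => j _.
rewrite tensZl tens_sumr scaler_sumr; apply: eq_bigr => k _.
rewrite tens_sumr scaler_sumr; apply: eq_bigr => l _.
by rewrite tensZr scalerA !tens_entry mulrACA.
Qed.

Lemma tform_pure (BA : 'rV[F]_n -> 'rV[F]_n -> F) (BB : 'rV[F]_m -> 'rV[F]_m -> F)
  (hA : bilinear_form BA) (hB : bilinear_form BB) x a y b :
  tensor_form BA BB (tens x a) (tens y b) = BA x y * BB a b.
Proof.
have hA' : bilinear_map (W := F^o) BA := hA.
have hB' : bilinear_map (W := F^o) BB := hB.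
rewrite (bm_expand hA' x y) (bm_expand hB' a b) /tensor_form mulr_suml.
apply: eq_bigr => i _; rewrite mulr_suml; apply: eq_bigr => j _.
rewrite mulr_sumr; apply: eq_bigr => k _.
rewrite mulr_sumr; apply: eq_bigr => l _.
rewrite !tens_entry /GRing.scale /=; ring.
Qed.
End Tens.

Section Lin.
Variables (F : fieldType) (n m : nat).
Local Notation T := 'M[F]_(n, m).

Definition lin {W : lmodType F} (h : T -> W) :=
  forall c u v, h (c *: u + v) = c *: h u + h v.

Lemma lin_decomp {W : lmodType F} {h : T -> W} : lin h -> forall X,
  h X = \sum_(i < n) \sum_(k < m) X i k *: h (tens (basis_vec i) (basis_vec k)).
Proof.
move=> hl.
have h0 : h 0 = 0.
  have := hl 1 0 0; rewrite !scale1r addr0 => e.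
  by apply: (addrI (h 0)); rewrite addr0 -e.
have hD u v : h (u + v) = h u + h v by have := hl 1 u v; rewrite !scale1r.
have hZ c u : h (c *: u) = c *: h u by have := hl c u 0; rewrite !addr0 h0 addr0.
move=> X; rewrite {1}(matrix_sum_delta X).
rewrite (big_morph h hD h0); apply: eq_bigr => i _.
rewrite (big_morph h hD h0); apply: eq_bigr => k _.
by rewrite hZ tens_basis.
Qed.

Lemma lin_ext {W : lmodType F} {h1 h2 : T -> W} : lin h1 -> lin h2 ->
  (forall x a, h1 (tens x a) = h2 (tens x a)) -> forall X, h1 X = h2 X.
Proof.
move=> l1 l2 H X; rewrite (lin_decomp l1) (lin_decomp l2).
by apply: eq_bigr => i _; apply: eq_bigr => k _; rewrite H.
Qed.

Lemma ext3 {W : lmodType F} {f g : T -> T -> T -> W} :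
  (forall Y Z, lin (fun X => f X Y Z)) -> (forall X Z, lin (fun Y => f X Y Z)) ->
  (forall X Y, lin (fun Z => f X Y Z)) ->
  (forall Y Z, lin (fun X => g X Y Z)) -> (forall X Z, lin (fun Y => g X Y Z)) ->
  (forall X Y, lin (fun Z => g X Y Z)) ->
  (forall x a y b z c, f (tens x a) (tens y b) (tens z c) = g (tens x a) (tens y b) (tens z c)) ->
  forall X Y Z, f X Y Z = g X Y Z.
Proof.
move=> f1 f2 f3 g1 g2 g3 H X Y Z.
apply: (lin_ext (h1 := fun X => f X Y Z) (h2 := fun X => g X Y Z)) => // x a.
apply: (lin_ext (h1 := fun Y => f (tens x a) Y Z) (h2 := fun Y => g (tens x a) Y Z)) => // y b.
by apply: (lin_ext (h1 := fun Z => f (tens x a) (tens y b) Z) (h2 := fun Z => g (tens x a) (tens y b) Z)).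
Qed.

Lemma ext2 {W : lmodType F} {f g : T -> T -> W} :
  (forall Y, lin (fun X => f X Y)) -> (forall X, lin (fun Y => f X Y)) ->
  (forall Y, lin (fun X => g X Y)) -> (forall X, lin (fun Y => g X Y)) ->
  (forall x a y b, f (tens x a) (tens y b) = g (tens x a) (tens y b)) ->
  forall X Y, f X Y = g X Y.
Proof.
move=> f1 f2 g1 g2 H X Y.
apply: (lin_ext (h1 := fun X => f X Y) (h2 := fun X => g X Y)) => // x a.
by apply: (lin_ext (h1 := fun Y => f (tens x a) Y) (h2 := fun Y => g (tens x a) Y)).
Qed.

Lemma lin_id : lin (fun X : T => X).
Proof. by []. Qed.
Lemma lin_add {W : lmodType F} {h1 h2 : T -> W} : lin h1 -> lin h2 -> lin (fun X => h1 X + h2 X).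
Proof. by move=> l1 l2 c u v; rewrite l1 l2 scalerDr addrACA. Qed.
Lemma lin_opp {W : lmodType F} {h : T -> W} : lin h -> lin (fun X => - h X).
Proof. by move=> l c u v; rewrite l opprD scalerN. Qed.
Lemma lin_sub {W : lmodType F} {h1 h2 : T -> W} : lin h1 -> lin h2 -> lin (fun X => h1 X - h2 X).
Proof. by move=> l1 l2; apply: lin_add => //; apply: lin_opp. Qed.
Lemma lin_bmL {W : lmodType F} {f : T -> T -> W} (hf : bilinear_map f) {h : T -> T} {Y} :
  lin h -> lin (fun X => f (h X) Y).
Proof. by move=> l c u v; rewrite l hf.1. Qed.
Lemma lin_bmR {W : lmodType F} {f : T -> T -> W} (hf : bilinear_map f) {h : T -> T} {Y} :
  lin h -> lin (fun X => f Y (h X)).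
Proof. by move=> l c u v; rewrite l hf.2. Qed.
End Lin.
Arguments lin {F n m W} h.

Arguments top_pure {F n m mu nu} hmu hnu x a y b.
Arguments tform_pure {F n m BA BB} hA hB x a y b.
Arguments top_bil {F n m} mu nu.
Arguments tform_bil {F n m} BA BB.
Arguments lin_bmL {F n m W f} hf {h Y}.
Arguments lin_bmR {F n m W f} hf {h Y}.
Ltac solve_lin h1 h2 h3 := cbv beta; repeat match goal with
 | |- lin (fun X => X) => apply lin_id
 | |- lin (fun X => @?a X + @?b X) => first [apply (@lin_add _ _ _ _ a b) | apply (@lin_add _ _ _ (_^o) a b)]
 | |- lin (fun X => - @?a X) => first [apply (@lin_opp _ _ _ _ a) | apply (@lin_opp _ _ _ (_^o) a)]
 | |- lin (fun X => _ (@?a X) ?Y) => first [apply (@lin_bmL _ _ _ _ _ h1 (a) Y) | apply (@lin_bmL _ _ _ _ _ h2 (a) Y) | apply (@lin_bmL _ _ _ _ _ h3 (a) Y)]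
 | |- lin (fun X => _ ?Y (@?a X)) => first [apply (@lin_bmR _ _ _ _ _ h1 (a) Y) | apply (@lin_bmR _ _ _ _ _ h2 (a) Y) | apply (@lin_bmR _ _ _ _ _ h3 (a) Y)]
 | |- lin (_ ?Y) => first [apply (@lin_bmR _ _ _ _ _ h1 (fun X => X) Y) | apply (@lin_bmR _ _ _ _ _ h2 (fun X => X) Y) | apply (@lin_bmR _ _ _ _ _ h3 (fun X => X) Y)]
end.


Ltac sl hC hBr hTF := try (intros ?; solve [solve_lin hC hBr hTF]); try (intros ? ?; solve [solve_lin hC hBr hTF]).

Lemma zm3 (V : zmodType) (p q r : V) : p + q + r = 0 -> p = - r + - q.
Proof. by move=> /eqP; rewrite addrAC -addrA addr_eq0 opprD => /eqP. Qed.

Lemma tensNr (F : fieldType) n m (x : 'rV[F]_n) (a : 'rV[F]_m) : tens x (- a) = - tens x a.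
Proof. by rewrite /tens mulmxN. Qed.

Theorem proposition2p37 (F : fieldType) (n m : nat)
    (star : 'rV[F]_n -> 'rV[F]_n -> 'rV[F]_n) (BA : 'rV[F]_n -> 'rV[F]_n -> F)
    (dot br : 'rV[F]_m -> 'rV[F]_m -> 'rV[F]_m) (BB : 'rV[F]_m -> 'rV[F]_m -> F) :
  [pchar F] =i pred0 ->
  quadratic_permutative star BA ->
  quadratic_poisson dot br BB ->
  quadratic_dual_pre_poisson (tensor_op star dot) (tensor_op star br)
                             (tensor_form BA BB).
Proof.
move=> _ [hs sA sP hBA [skA ndA invA]] [hd hb dC dA [bS jac leib hBB [syB ndB invBd invBb]]].
have hC : bilinear_map (tensor_op (n:=n) (m:=m) star dot) := top_bil star dot.
have hBr : bilinear_map (tensor_op (n:=n) (m:=m) star br) := top_bil star br.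
have hTF : bilinear_map (W := F^o) (tensor_form (n:=n) (m:=m) BA BB) := tform_bil BA BB.
have hA' : bilinear_map (W := F^o) BA := hBA.
have hB' : bilinear_map (W := F^o) BB := hBB.
have jacL a b c : br a (br b c) = br (br a b) c + br b (br a c).
  by rewrite (bS (br a b)) (bS a c) (bmNr hb); apply: zm3; exact: jac.
have leib2 a b c : br (dot a b) c = dot a (br b c) + dot b (br a c).
  by rewrite bS leib (bS c a) (bS c b) (bmNl hd) (bmNr hd) opprD !opprK addrC (dC (br a c) b).
split=> //.
- apply: ext3; sl hC hBr hTF.
  by move=> x a y b z c; rewrite !(top_pure hs hd) sA dA.
- apply: ext3; sl hC hBr hTF.
  by move=> x a y b z c; rewrite !(top_pure hs hd) sP (dC a b).
split.
- apply: ext3; sl hC hBr hTF.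
  move=> x a y b z c; rewrite !(top_pure hs hb) !sA (sP y x) -tensDr.
  by rewrite jacL.
- apply: ext3; sl hC hBr hTF.
  move=> x a y b z c; rewrite !(top_pure hs hb, top_pure hs hd) !sA (sP y x) -tensDr.
  by rewrite leib.
- apply: ext3; sl hC hBr hTF.
  move=> x a y b z c; rewrite !(top_pure hs hb, top_pure hs hd) !sA (sP y x) -tensDr.
  by rewrite leib2.
- apply: ext3; sl hC hBr hTF.
  move=> x a y b z c; rewrite !(top_pure hs hb, top_pure hs hd) (sP y x).
  by rewrite (bS b a) (bmNl hd) tensNr opprK.
split.
- exact: tform_bil.
- apply: (@ext2 F n m F^o); sl hC hBr hTF.
  move=> x a y b; rewrite !(tform_pure hBA hBB).
  by rewrite skA syB mulNr.
- move=> X H.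
  have HX y b : \sum_(i < n) \sum_(k < m) X i k * (BA (basis_vec i) y * BB (basis_vec k) b) = 0.
    have l : @lin F n m F^o (fun X => tensor_form BA BB X (tens y b)).
      by apply: (lin_bmL hTF); exact: lin_id.
    have e := @lin_decomp F n m F^o _ l X; cbv beta in e.
    transitivity (tensor_form BA BB X (tens y b)); last exact: H.
    rewrite e; apply: eq_bigr => i _; apply: eq_bigr => k _.
    by rewrite (tform_pure hBA hBB).
  have H1 y k : \sum_(i < n) X i k * BA (basis_vec i) y = 0.
    have H1' : \sum_(k < m) (\sum_(i < n) X i k * BA (basis_vec i) y) *: basis_vec k = 0 :> 'rV[F]_m.
      apply: ndB => b; rewrite (bm_suml hB') -[RHS](HX y b) exchange_big /=.
      apply: eq_bigr => k' _; rewrite (bmZl hB') /GRing.scale /= mulr_suml.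
      by apply: eq_bigr => i _; rewrite mulrA.
    by have := congr1 (fun v : 'rV[F]_m => v 0 k) H1'; rewrite coef_basis mxE.
  apply/matrixP => i k; rewrite mxE.
  have H2 : \sum_(i < n) X i k *: basis_vec i = 0 :> 'rV[F]_n.
    apply: ndA => y; rewrite (bm_suml hA') -[RHS](H1 y k).
    by apply: eq_bigr => i' _; rewrite (bmZl hA').
  by have := congr1 (fun v : 'rV[F]_n => v 0 i) H2; rewrite coef_basis mxE.
- apply: (@ext3 F n m F^o); sl hC hBr hTF.
  move=> x a y b z c; rewrite !(top_pure hs hd) (bmBr hTF) !(tform_pure hBA hBB).
  by rewrite invA (bmBr hA') invBd (dC c b) mulrBl.
- apply: (@ext3 F n m F^o); sl hC hBr hTF.
  move=> x a y b z c; rewrite !(top_pure hs hb) (bmDr hTF) !(tform_pure hBA hBB).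
  by rewrite invA (bmBr hA') invBb (bS c b) (bmNr hB') mulrBl mulrN.
Qed.
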